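(* Let $n,k\ge 1$, let $W(k)\subseteq[n]^k$ be a (multi)set of $k$-tuples, let $\mathcal C\subseteq\mathbb F_2^n$ be a linear $\eta_0$-balanced code, and suppose $\mathcal C'=\mathrm{dsum}_{W(k)}(\mathcal C)$ is $\eta$-balanced, where $\eta\in(0,1)$. Let $\tilde y\in\mathbb F_2^{W(k)}$ and define $$\mathcal L=\mathcal L(\tilde y,\mathcal C,\mathcal C')=\Big\{(z,\mathrm{dsum}_{W(k)}(z)) : z\in\mathcal C,\ \Delta(\mathrm{dsum}_{W(k)}(z),\tilde y)\le \tfrac12-\sqrt\eta\Big\}.$$ Let $\zeta<1/2$ and suppose $\mathcal L'$ is a $\zeta$-cover of $\mathcal L$ such that $\Delta(y',\tilde y)\le \frac12-\sqrt\eta$ for every $(z',y')\in\mathcal L'$. If $W(k)$ is a $(1-2\zeta,\eta)$-parity sampler, then there exists $\mathcal L''\subseteq\mathcal L'$ with $|\mathcal L''|\le 1/\eta$ which is a $(2\zeta)$-cover of $\mathcal L$.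
   Context: For $z,z'\in\mathbb F_2^m$, $\Delta(z,z')=|\{i: z_i\neq z'_i\}|/m$ is the relative Hamming distance, and $\mathrm{bias}(z)=|\mathbb E_{i\in[m]}(-1)^{z_i}|$. A code $\mathcal C$ is $\varepsilon$-balanced if $\mathrm{bias}(z+z')\le\varepsilon$ for all distinct $z,z'\in\mathcal C$. For $W(k)\subseteq[n]^k$ and $z\in\mathbb F_2^n$, the direct sum lifting $\mathrm{dsum}_{W(k)}(z)\in\mathbb F_2^{W(k)}$ has coordinates $y_{\mathfrak s}=\sum_{i\in\mathfrak s} z_i$ for $\mathfrak s\in W(k)$ (sum over the entries of the tuple), and $\mathrm{dsum}_{W(k)}(\mathcal C)=\{\mathrm{dsum}_{W(k)}(z):z\in\mathcal C\}$. $W(k)$ is an $(\varepsilon_0,\varepsilon)$-parity sampler if every $z\in\mathbb F_2^n$ with $\mathrm{bias}(z)\le\varepsilon_0$ satisfies $\mathrm{bias}(\mathrm{dsum}_{W(k)}(z))\le\varepsilon$. Given a set $\mathcal L=\{(z,\mathrm{dsum}_{W(k)}(z)): z\in A\}$ with $A\subseteq\mathcal C$, a set $\mathcal L'=\{(z^{(j)},\mathrm{dsum}_{W(k)}(z^{(j)}))\}_{j=1}^m$ with $z^{(j)}\in\mathbb F_2^n$ is a $\zeta$-cover of $\mathcal L$ if for every $(z,y)\in\mathcal L$ there is $(z',y')\in\mathcal L'$ with $\mathrm{bias}(z-z')>1-2\zeta$ (i.e. $\Delta(z,z')<\zeta$ or $\Delta(z,z')>1-\zeta$). *)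

(* Defs.v *)
From HB Require Import structures.
From mathcomp Require Import all_boot all_order all_algebra.
From mathcomp Require Import reals.
Set Implicit Arguments. Unset Strict Implicit. Unset Printing Implicit Defensive.
Import Order.TTheory GRing.Theory Num.Theory.
Local Open Scope ring_scope.

Definition rdist (R : realType) (n : nat) (z z' : 'rV['F_2]_n) : R :=
  (#|[set i : 'I_n | z 0 i != z' 0 i]|%:R) / n%:R.

Definition bias (R : realType) (n : nat) (z : 'rV['F_2]_n) : R :=
  `| (\sum_(i < n) (-1) ^+ (nat_of_ord (z 0 i))) / n%:R |.

(* linear code over F_2: an F_2-subspace (scalars are 0,1, so closure under
   0 and + is exactly being a subspace) *)
Definition linear_code (n : nat) (C : {set 'rV['F_2]_n}) : Prop :=
  0 \in C /\ (forall x y, x \in C -> y \in C -> x + y \in C).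

Definition balanced (R : realType) (n : nat) (eps : R) (C : {set 'rV['F_2]_n}) : Prop :=
  forall z z', z \in C -> z' \in C -> z != z' -> @bias R n (z + z') <= eps.

(* W(k) is a multiset of m k-tuples, given as an indexing W : 'I_m -> [n]^k *)
Definition dsum (n k m : nat) (W : 'I_m -> k.-tuple 'I_n) (z : 'rV['F_2]_n)
  : 'rV['F_2]_m :=
  \row_(s < m) \sum_(j < k) z 0 (tnth (W s) j).

Definition dsum_code (n k m : nat) (W : 'I_m -> k.-tuple 'I_n)
  (C : {set 'rV['F_2]_n}) : {set 'rV['F_2]_m} :=
  [set dsum W z | z in C].

Definition parity_sampler (R : realType) (n k m : nat)
  (W : 'I_m -> k.-tuple 'I_n) (eps0 eps : R) : Prop :=
  forall z : 'rV['F_2]_n, @bias R n z <= eps0 -> @bias R m (dsum W z) <= eps.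

(* The list L(ytil, C, C'), represented by its first components z
   (the second component is determined: y = dsum z). *)
Definition Llist (R : realType) (n k m : nat) (W : 'I_m -> k.-tuple 'I_n)
  (C : {set 'rV['F_2]_n}) (ytil : 'rV['F_2]_m) (eta : R) : {set 'rV['F_2]_n} :=
  [set z in C | @rdist R m (dsum W z) ytil <= 2^-1 - Num.sqrt eta].

Definition is_cover (R : realType) (n : nat) (zeta : R)
  (L L' : {set 'rV['F_2]_n}) : Prop :=
  forall z, z \in L -> exists2 z', z' \in L' & @bias R n (z - z') > 1 - 2 * zeta.

(* Main.v *)
Require Import Defs.
From HB Require Import structures.
From mathcomp Require Import all_boot all_order all_algebra.
From mathcomp Require Import reals.
From mathcomp Require Import lra ring.
Set Implicit Arguments. Unset Strict Implicit. Unset Printing Implicit Defensive.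
Import Order.TTheory GRing.Theory Num.Theory.
Local Open Scope ring_scope.

Lemma F2_cases (a : 'F_2) : a = 0 \/ a = 1.
Proof. case: a => [[|[|a]] Ha]; [left|right|by []]; exact: val_inj. Qed.

Section S.
Variable R : realType.
Definition chi (a : 'F_2) : R := (-1) ^+ (nat_of_ord a).

Lemma chi0 : chi 0 = 1. Proof. by []. Qed.
Lemma chi1 : chi 1 = -1. Proof. by rewrite /chi expr1. Qed.

Lemma chiD a b : chi (a + b) = chi a * chi b.
Proof.
case: (F2_cases a) => ->; case: (F2_cases b) => ->;
  rewrite ?addr0 ?add0r ?chi0 ?chi1 ?mul1r ?mulr1 //.
have -> : (1 + 1 : 'F_2) = 0 by apply: val_inj.
by rewrite chi0 mulrNN mulr1.
Qed.

Lemma chiN a : chi (- a) = chi a.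
Proof.
case: (F2_cases a) => ->; rewrite ?oppr0 //.
Qed.

Lemma chiB a b : chi (a - b) = chi a * chi b.
Proof. by rewrite chiD chiN. Qed.

Lemma chi_sq a : chi a * chi a = 1.
Proof. by case: (F2_cases a) => ->; rewrite ?chi0 ?chi1 ?mulr1 ?mulrNN ?mulr1. Qed.

Lemma chi_le1 a : chi a <= 1.
Proof. by case: (F2_cases a) => ->; rewrite ?chi0 ?chi1 //; lra. Qed.

Lemma normr_chi a : `|chi a| = 1.
Proof. by case: (F2_cases a) => ->; rewrite ?chi0 ?chi1 ?normrN normr1. Qed.

Lemma chi_ne a b : chi (a - b) = 1 - 2 * (a != b)%:R.
Proof.
case: (F2_cases a) => ->; case: (F2_cases b) => ->; rewrite ?subrr ?eqxx /= ?chi0;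
  try lra.
- rewrite sub0r chiN chi1 /=; lra.
- rewrite subr0 chi1 /=; lra.
Qed.
Definition sc n (z : 'rV['F_2]_n) : R := \sum_(i < n) chi (z 0 i).

Lemma biasE n (z : 'rV['F_2]_n) : (0 < n)%N -> @bias R n z = `|sc z| / n%:R.
Proof.
move=> n0; rewrite /bias normrM normfV (ger0_norm (ler0n _ _)) //.
Qed.

Lemma sc_le n (z : 'rV['F_2]_n) : `|sc z| <= n%:R.
Proof.
rewrite /sc; apply: le_trans (ler_norm_sum _ _ _) _.
under eq_bigr do rewrite normr_chi.
by rewrite sumr_const card_ord.
Qed.

Lemma bias_le1 n (z : 'rV['F_2]_n) : (0 < n)%N -> @bias R n z <= 1.
Proof.
move=> n0; rewrite biasE // ler_pdivrMr ?ltr0n // mul1r; exact: sc_le.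
Qed.

Lemma sc_sym n (x y : 'rV['F_2]_n) : sc (x - y) = sc (y - x).
Proof.
rewrite /sc; apply: eq_bigr => i _; rewrite !mxE !chiB mulrC //.
Qed.

Lemma bias_sym n (x y : 'rV['F_2]_n) : @bias R n (x - y) = @bias R n (y - x).
Proof.
rewrite /bias; congr (`| _ / _ |); exact: (sc_sym x y).
Qed.

Lemma sgn_mul (s : R) : `|s| = 1 -> s <= 1.
Proof. move=> h; by rewrite -h ler_norm. Qed.

Lemma tri n (x y w : 'rV['F_2]_n) :
  `|sc (x - y)| + `|sc (y - w)| - n%:R <= `|sc (x - w)|.
Proof.
set P := sc (x - y); set Q := sc (y - w).
pose s : R := if 0 <= P then 1 else -1.
pose t : R := if 0 <= Q then 1 else -1.
have sP : s * P = `|P|.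
  rewrite /s; case: ifP => h; first by rewrite mul1r ger0_norm.
  by rewrite mulN1r ler0_norm // ltW // ltNge h.
have tQ : t * Q = `|Q|.
  rewrite /t; case: ifP => h; first by rewrite mul1r ger0_norm.
  by rewrite mulN1r ler0_norm // ltW // ltNge h.
have ns : `|s| = 1 by rewrite /s; case: ifP; rewrite ?normrN normr1.
have nt : `|t| = 1 by rewrite /t; case: ifP; rewrite ?normrN normr1.
have key : s * P + t * Q - n%:R <= s * t * sc (x - w).
  have En : n%:R = \sum_(i < n) (1:R) by rewrite sumr_const card_ord.
  rewrite /P /Q /sc !mulr_sumr En -!big_split /=.
  rewrite -sumrB; apply: ler_sum => i _.
  have -> : (x - w) 0 i = (x - y) 0 i + (y - w) 0 i.
    by rewrite !mxE addrA subrK.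
  rewrite chiD.
  have h1 : s * chi ((x - y) 0 i) <= 1.
    by apply: sgn_mul; rewrite normrM ns normr_chi mulr1.
  have h2 : t * chi ((y - w) 0 i) <= 1.
    by apply: sgn_mul; rewrite normrM nt normr_chi mulr1.
  have : 0 <= (1 - s * chi ((x - y) 0 i)) * (1 - t * chi ((y - w) 0 i)).
    by apply: mulr_ge0; rewrite subr_ge0.
  move=> H; have E : s * t * (chi ((x - y) 0 i) * chi ((y - w) 0 i)) =
    (s * chi ((x - y) 0 i)) * (t * chi ((y - w) 0 i)) by ring.
  rewrite E; nra.
rewrite -sP -tQ; apply: le_trans key _.
apply: le_trans (ler_norm _) _; by rewrite !normrM ns nt !mul1r.
Qed.
End S.
Section T.
Variable R : realType.

Lemma sumb_card n (P : pred 'I_n) : \sum_(i < n) ((P i)%:R : R) = (#|[set i | P i]|)%:R.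
Proof.
rewrite -sum1dep_card natr_sum [RHS]big_mkcond /=; apply: eq_bigr => i _.
by case: (P i).
Qed.

Lemma sc_dist m (y yt : 'rV['F_2]_m) :
  sc R (y - yt) = m%:R - 2 * (#|[set i : 'I_m | y 0 i != yt 0 i]|)%:R.
Proof.
rewrite /sc; under eq_bigr do rewrite !mxE chi_ne.
rewrite sumrB -mulr_sumr sumb_card sumr_const card_ord //.
Qed.

Lemma sc_close m (y yt : 'rV['F_2]_m) (eta : R) : (0 < m)%N ->
  @rdist R m y yt <= 2^-1 - Num.sqrt eta ->
  2 * m%:R * Num.sqrt eta <= sc R (y - yt).
Proof.
move=> m0; rewrite /rdist sc_dist ler_pdivrMr ?ltr0n //.
set c := (#|_|)%:R => h. lra.
Qed.

Lemma bias_tri n (x y w : 'rV['F_2]_n) (a : R) : (0 < n)%N ->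
  a < @bias R n (x - y) -> a < @bias R n (y - w) -> 2 * a - 1 < @bias R n (x - w).
Proof.
move=> n0; rewrite !biasE // !ltr_pdivlMr ?ltr0n // => h1 h2.
have := tri R x y w. lra.
Qed.
End T.
Section U.
Variable R : realType.

Lemma cs m (S : 'I_m -> R) : (\sum_i S i) ^+ 2 <= m%:R * \sum_i S i ^+ 2.
Proof.
case: m S => [|m] S; first by rewrite !big_ord0 expr0n /= mul0r.
set T := \sum_i S i.
set M : R := m.+1%:R.
have h : 0 <= \sum_(i < m.+1) (M * S i - T) ^+ 2 by apply: sumr_ge0 => i _; exact: sqr_ge0.
have E : \sum_(i < m.+1) (M * S i - T) ^+ 2 =
   M ^+ 2 * (\sum_i S i ^+ 2) - (2 * M * T) * T + M * T ^+ 2.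
  rewrite (eq_bigr (fun i => M ^+ 2 * S i ^+ 2 - (2 * M * T) * S i + T ^+ 2)); last first.
    by move=> i _; ring.
  rewrite big_split sumrB /= -!mulr_sumr sumr_const card_ord -/T.
  by rewrite -mulr_natl -/M; ring.
rewrite E in h.
have mp' : (0 < M) by rewrite ltr0n.
set Q := \sum_i S i ^+ 2 in h *.
have : 0 <= M * (M * Q - T ^+ 2) by nra.
rewrite pmulr_rge0 //; nra.
Qed.
End U.
Section V.
Variable R : realType.
Lemma arith (L M e s T Q : R) : 0 <= L -> 0 < M -> 0 < e -> 0 <= s -> s ^+ 2 = e ->
  L * (2 * M * s) <= T -> T ^+ 2 <= M * Q -> Q <= L * (L * M * e + M) -> L * e <= 1.
Proof.
move=> L0 M0 e0 s0 se hT hTQ hQ.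
have T0 : 0 <= L * (2 * M * s) by apply: mulr_ge0 => //; apply: mulr_ge0 => //; nra.
have h1 : (L * (2 * M * s)) ^+ 2 <= T ^+ 2.
  rewrite ler_sqr ?nnegrE //; exact: le_trans hT.
have h2 : M * Q <= M * (L * (L * M * e + M)) by rewrite ler_pM2l.
have h3 : (L * (2 * M * s)) ^+ 2 = M ^+ 2 * (4 * L ^+ 2 * e) by rewrite -se; ring.
have h4 : M * (L * (L * M * e + M)) = M ^+ 2 * (L * (L * e + 1)) by ring.
have h5 : M ^+ 2 * (4 * L ^+ 2 * e) <= M ^+ 2 * (L * (L * e + 1)).
  rewrite -h3 -h4; apply: le_trans h1 _; exact: le_trans hTQ h2.
rewrite ler_pM2l ?exprn_gt0 // in h5.
have [->|Lp] := eqVneq L 0; first by rewrite mul0r.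
have Lp' : 0 < L by rewrite lt_def Lp.
have : L * (3 * L * e) <= L * 1 by nra.
rewrite ler_pM2l //; nra.
Qed.

Lemma dsumB n k m (W : 'I_m -> k.-tuple 'I_n) (z z' : 'rV['F_2]_n) :
  dsum W (z - z') = dsum W z - dsum W z'.
Proof.
apply/rowP => s; rewrite !mxE -sumrB; apply: eq_bigr => j _; rewrite !mxE //.
Qed.

Lemma johnson (T : finType) m (A : {set T}) (Y : T -> 'rV['F_2]_m) (yt : 'rV['F_2]_m)
  (eta : R) : (0 < m)%N -> 0 < eta ->
 (forall z, z \in A -> 2 * m%:R * Num.sqrt eta <= sc R (Y z - yt)) ->
 (forall z z', z \in A -> z' \in A -> z != z' -> sc R (Y z - Y z') <= m%:R * eta) ->
 #|A|%:R * eta <= 1.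
Proof.
move=> m0 e0 hc hf.
pose v z i := chi R ((Y z - yt) 0 i).
pose S i := \sum_(z in A) v z i.
have hT : \sum_i S i = \sum_(z in A) sc R (Y z - yt) by rewrite /S exchange_big.
have hTge : #|A|%:R * (2 * m%:R * Num.sqrt eta) <= \sum_i S i.
  rewrite hT; apply: le_trans (ler_sum _ hc); by rewrite sumr_const mulr_natl.
have hQ : \sum_i S i ^+ 2 = \sum_(z in A) \sum_(z' in A) sc R (Y z - Y z').
  transitivity (\sum_i \sum_(z in A) \sum_(z' in A) v z i * v z' i).
    apply: eq_bigr => i _; rewrite expr2 /S mulr_suml; apply: eq_bigr => z _.
    by rewrite mulr_sumr.
  rewrite exchange_big; apply: eq_bigr => z _; rewrite exchange_big /sc.
  apply: eq_bigr => z' _; apply: eq_bigr => i _; rewrite /v !mxE !chiB.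
  have := chi_sq R (yt 0 i); move=> h.
  set a := chi R (Y z 0 i); set b := chi R (Y z' 0 i); set c := chi R (yt 0 i).
  transitivity (a * b * (c * c)); first ring. by rewrite h mulr1.
have hQle : \sum_i S i ^+ 2 <= #|A|%:R * (#|A|%:R * m%:R * eta + m%:R).
  rewrite hQ.
  apply: (@le_trans _ _ (\sum_(z in A) \sum_(z' in A) (m%:R * eta + (z == z')%:R * m%:R))).
    apply: ler_sum => z zA; apply: ler_sum => z' z'A.
    have [<-|ne] := eqVneq z z'.
      rewrite subrr mul1r; apply: le_trans (ler_norm _) _.
      apply: le_trans (sc_le R _) _; rewrite lerDr; apply: mulr_ge0 => //; exact: ltW.
    by rewrite mul0r addr0; apply: hf.
  rewrite (eq_bigr (fun _ => #|A|%:R * m%:R * eta + m%:R)); last first.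
    move=> z zA; rewrite big_split /= sumr_const (bigD1 z) //= eqxx mul1r.
    rewrite big1 ?addr0; last by move=> z' /andP [_ ne]; rewrite eq_sym (negbTE ne) mul0r.
    rewrite -mulr_natl; ring.
  by rewrite sumr_const -(mulr_natl (_ + _) #|A|).
apply: (arith _ _ _ _ _ hTge (cs S) hQle).
- by [].
- by rewrite ltr0n.
- by [].
- exact: sqrtr_ge0.
- by rewrite sqr_sqrtr // ltW.
Qed.
End V.

Theorem mainTheorem1 (R : realType) (n k m : nat) (W : 'I_m -> k.-tuple 'I_n)
  (C : {set 'rV['F_2]_n}) (eta0 eta zeta : R) (ytil : 'rV['F_2]_m)
  (L' : {set 'rV['F_2]_n}) :
  (0 < n)%N -> (0 < k)%N -> (0 < m)%N ->
  linear_code C -> balanced eta0 C -> balanced eta (dsum_code W C) ->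
  0 < eta -> eta < 1 -> zeta < 2^-1 ->
  is_cover zeta (Llist W C ytil eta) L' ->
  (forall z', z' \in L' -> @rdist R m (dsum W z') ytil <= 2^-1 - Num.sqrt eta) ->
  @parity_sampler R n k m W (1 - 2 * zeta) eta ->
  exists L'' : {set 'rV['F_2]_n},
    [/\ L'' \subset L', #|L''|%:R <= eta^-1 & is_cover (2 * zeta) (Llist W C ytil eta) L''].
Proof.
move=> n0 k0 m0 _ _ _ e0 e1 z12 cov close ps.
pose P := fun B : {set 'rV['F_2]_n} => (B \subset L') &&
  [forall x in B, forall y in B, (x != y) ==> (@bias R n (x - y) <= 1 - 2 * zeta)].
have P0 : P set0.
  rewrite /P sub0set /=; apply/forall_inP => x; by rewrite inE.
have [L'' maxL _] := maxset_exists P0.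
have /andP [sub pw] := maxsetp maxL.
have pw' : forall x y, x \in L'' -> y \in L'' -> x != y -> @bias R n (x - y) <= 1 - 2 * zeta.
  move=> x y xL yL ne; move/forall_inP: pw => /(_ x xL) /forall_inP /(_ y yL).
  by move/implyP; apply.
exists L''; split => //.
- have J : #|L''|%:R * eta <= 1.
    apply: (johnson (Y := dsum W) (yt := ytil)) => //.
    + move=> z zL; apply: sc_close => //; apply: close; exact: (subsetP sub).
    + move=> z z' zL z'L ne; rewrite -dsumB.
      have hb := ps _ (pw' _ _ zL z'L ne).
      rewrite biasE // ler_pdivrMr ?ltr0n // in hb.
      apply: le_trans (ler_norm _) _; by rewrite mulrC.
  by rewrite -(div1r eta) ler_pdivlMr.
- move=> z zL; have [z' z'L' hz] := cov z zL.
  have [zn|zp] := ltP zeta 0.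
    have := bias_le1 R (z - z') n0; lra.
  case: (boolP (z' \in L'')) => [inL|notin].
    by exists z' => //; lra.
  case: (boolP [exists w in L'', 1 - 2 * zeta < @bias R n (z' - w)]) => [/exists_inP [w wL hw]|].
    exists w => //; have := bias_tri n0 hz hw; lra.
  move=> /exists_inP nex; exfalso; move/negP: notin; apply.
  have PU : P (z' |: L'').
    rewrite /P subUset sub1set z'L' sub /=.
    apply/forall_inP => x xU; apply/forall_inP => y yU; apply/implyP => ne.
    have far : forall w, w \in L'' -> @bias R n (z' - w) <= 1 - 2 * zeta.
      move=> w wL; rewrite leNgt; apply/negP => h; apply: nex; by exists w.
    move: ne; move: xU yU; rewrite !in_setU1 => /orP [/eqP ->|xL] /orP [/eqP ->|yL] ne.
    + by rewrite eqxx in ne.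
    + exact: far.
    + by rewrite bias_sym; apply: far.
    + exact: pw'.
  have := maxsetsup maxL PU (subsetUr _ _) => E.
  by rewrite -E setU11.
Qed.
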